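(* Let $\mathcal H_s\cong\mathbb C^d$, $\mathcal H_u\cong\mathbb C^k$, let $\chi\in\mathcal H_u$ be a unit vector and $U$ a unitary on $\mathcal H_s\otimes\mathcal H_u$ such that the transition operator $T(\rho)=\mathrm{Tr}_u\big(U(\rho\otimes|\chi\rangle\langle\chi|)U^*\big)$ is primitive, with stationary state $\rho_{ss}$. Let $\mathcal H_a\cong\mathbb C^d$ be an additional (absorber) system. Then there exist a unit vector $\tilde\psi\in\mathcal H_s\otimes\mathcal H_a$ with $\mathrm{Tr}_a|\tilde\psi\rangle\langle\tilde\psi|=\rho_{ss}$ and a unitary $V$ on $\mathcal H_a\otimes\mathcal H_u$ such that, with $W:=(\mathbf 1_s\otimes V)(U\otimes\mathbf 1_a)$ acting on $\mathcal H_s\otimes\mathcal H_a\otimes\mathcal H_u$ (with the obvious reordering of tensor factors), $$W(\tilde\psi\otimes\chi)=\tilde\psi\otimes\chi .$$ In particular, if the doubled-up system $\mathcal H_s\otimes\mathcal H_a$ starts in $\tilde\psi$ and interacts successively via $W$ with $n$ noise units each prepared in $\chi$, the joint final state is $\tilde\psi\otimes\chi^{\otimes n}$, so the output state of the $n$ noise units equals the input state $\chi^{\otimes n}$.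
   Context: A quantum Markov chain (discrete-time input-output system) consists of a system $\mathcal H_s$ interacting successively via a fixed unitary $U$ on $\mathcal H_s\otimes\mathcal H_u$ with independent noise units, each prepared in state $\chi$. Primitive means $T$ has a unique full-rank stationary state $\rho_{ss}$ ($T(\rho_{ss})=\rho_{ss}$) and $1$ is the only eigenvalue of $T$ on the unit circle. *)

(* Defs.v *)
(* Tensor products use mathcomp-real-closed's [tensmx] (A *t B), whose index
   convention is mxtens_index (i, j) = i * n + j (first factor major). *)
From HB Require Import structures.
From mathcomp Require Import all_boot all_order all_algebra.
From mathcomp Require Import reals.
From mathcomp.real_closed Require Import complex mxtens.
From mathcomp Require Import sesquilinear spectral.
Set Implicit Arguments. Unset Strict Implicit. Unset Printing Implicit Defensive.
Import Order.TTheory GRing.Theory Num.Theory.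
Local Open Scope ring_scope.
Local Open Scope sesquilinear_scope.

Section QMC.
Variable C : numClosedFieldType.

Definition ptrace2 {m n : nat} (M : 'M[C]_(m * n)) : 'M[C]_m :=
  \matrix_(i, j) \sum_(l < n) M (mxtens_index (i, l)) (mxtens_index (j, l)).

Definition ketbra {n : nat} (v : 'cV[C]_n) : 'M[C]_n := v *m v ^t*.

Definition unit_vec {n : nat} (v : 'cV[C]_n) : Prop := v ^t* *m v = 1%:M.

Definition psd {n : nat} (A : 'M[C]_n) : Prop :=
  A ^t* = A /\ forall v : 'cV[C]_n, 0 <= (v ^t* *m A *m v) 0 0.
Definition density {n : nat} (rho : 'M[C]_n) : Prop := psd rho /\ \tr rho = 1.

Definition transition {d k : nat} (U : 'M[C]_(d * k)) (chi : 'cV[C]_k)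
  (rho : 'M[C]_d) : 'M[C]_d :=
  ptrace2 (U *m (rho *t ketbra chi) *m U ^t*).

Definition primitive {d : nat} (T : 'M[C]_d -> 'M[C]_d) : Prop :=
  (exists rho : 'M[C]_d,
      [/\ density rho, T rho = rho, \rank rho = d &
          forall rho' : 'M[C]_d, density rho' -> T rho' = rho' -> rho' = rho])
  /\ (forall (z : C) (X : 'M[C]_d), X != 0 -> T X = z *: X -> `|z| = 1 -> z = 1).

(* Operators on H_s ⊗ H_a ⊗ H_u, indexed ((s, a), u), i.e. 'I_(d * d' * k). *)
Definition idx_s {d d' k : nat} (x : 'I_(d * d' * k)) : 'I_d :=
  (mxtens_unindex (mxtens_unindex x).1).1.
Definition idx_a {d d' k : nat} (x : 'I_(d * d' * k)) : 'I_d' :=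
  (mxtens_unindex (mxtens_unindex x).1).2.
Definition idx_u {d d' k : nat} (x : 'I_(d * d' * k)) : 'I_k :=
  (mxtens_unindex x).2.

Definition U_tens_1a {d d' k : nat} (U : 'M[C]_(d * k)) : 'M[C]_(d * d' * k) :=
  \matrix_(x, y)
    (U (mxtens_index (idx_s x, idx_u x)) (mxtens_index (idx_s y, idx_u y))
     * (idx_a x == idx_a y)%:R).

Definition one_s_tens_V {d d' k : nat} (V : 'M[C]_(d' * k)) : 'M[C]_(d * d' * k) :=
  \matrix_(x, y)
    ((idx_s x == idx_s y)%:R
     * V (mxtens_index (idx_a x, idx_u x)) (mxtens_index (idx_a y, idx_u y))).

End QMC.

(* Main.v *)
Require Import Defs.
From HB Require Import structures.
From mathcomp Require Import all_boot all_order all_algebra.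
From mathcomp Require Import reals.
From mathcomp.real_closed Require Import complex mxtens.
From mathcomp Require Import sesquilinear spectral.
Import Order.TTheory GRing.Theory Num.Theory.
Local Open Scope ring_scope.
Local Open Scope sesquilinear_scope.

Import Num.Def.
Set Implicit Arguments. Unset Strict Implicit. Unset Printing Implicit Defensive.

Section LA.
Variable C : numClosedFieldType.

Local Notation "B ^!" :=
  (orthomx conjC (mx_of_hermitian (hermitian1mx _)) B) :
    matrix_set_scope.
Local Notation "A '_|_ B" := (A%MS <= B^!)%MS : bool_scope.

Lemma unitary_complete p m (T : 'M[C]_(p,m)) : T \is unitarymx ->
  exists2 S : 'M[C]_m, S \is unitarymx & pid_mx p *m S = T.
Proof.
move=> Tu.
have rT : \rank T = p := mxrank_unitary Tu.
have lepm : (p <= m)%N by rewrite -rT rank_leq_col.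
pose Cm := schmidt (row_base T^!%MS).
have Cu : Cm \is unitarymx by apply: schmidt_unitarymx; rewrite rank_leq_col.
have orth : T *m Cm^t* = 0.
  apply/orthomx1P.
  rewrite /Cm (eqmx_ortho _ (eqmx_schmidt_free (row_base_free _))) (eqmx_ortho _ (eq_row_base _)).
  by rewrite ortho_id.
have E : (p + \rank T^!)%N = m by rewrite rank_ortho rT subnKC.
have S0u : col_mx T Cm \is unitarymx.
  apply/unitarymxP; rewrite tr_col_mx map_row_mx mul_col_row.
  rewrite !(unitarymxP _) // orth.
  have -> : Cm *m T^t* = 0.
    have : (T *m Cm^t*)^t* = 0 by rewrite orth trmx0 map_mx0.
    by rewrite trmx_mul map_mxM trmxCK.
  by rewrite -scalar_mx_block.
have S0p : pid_mx p *m col_mx T Cm = T.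
  by rewrite pid_mx_row mul_row_col mul1mx mul0mx addr0.
move: (col_mx T Cm) S0u S0p; rewrite E => S S0u S0p.
by exists S.
Qed.

Lemma adjM m n p (A : 'M[C]_(m,n)) (B : 'M[C]_(n,p)) : (A *m B)^t* = B^t* *m A^t*.
Proof. by rewrite trmx_mul map_mxM. Qed.

Lemma purif_unitary p m (X Y : 'M[C]_(p,m)) :
  X *m X^t* = Y *m Y^t* -> X *m X^t* \in unitmx ->
  exists2 W : 'M[C]_m, W \is unitarymx & X = Y *m W.
Proof.
move=> XY Xu.
have rX : \rank (X *m X^t*) = p by rewrite mxrank_unit.
have lepm : (p <= m)%N.
  by rewrite -{1}rX (leq_trans (mxrankM_maxl _ _)) ?rank_leq_col.
have fac : forall Z : 'M[C]_(p,m), Z = (Z *m (schmidt Z)^t*) *m schmidt Z.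
  move=> Z; have /submxP [D eD] := schmidt_sub Z.
  have Su : schmidt Z \is unitarymx by apply: schmidt_unitarymx.
  move: Su eD; set S := schmidt Z => Su eD.
  by rewrite {1 2}eD mulmxtVK.
have gram : forall Z : 'M[C]_(p,m),
    (Z *m (schmidt Z)^t*) *m (Z *m (schmidt Z)^t*)^t* = Z *m Z^t*.
  move=> Z; rewrite adjM trmxCK mulmxA -[Z *m _ *m _]mulmxA.
  by rewrite mulmxA -(fac Z).
set AX := X *m (schmidt X)^t*; set AY := Y *m (schmidt Y)^t*.
have GX : AX *m AX^t* = X *m X^t* by apply: gram.
have GY : AY *m AY^t* = X *m X^t* by rewrite XY; apply: gram.
have AYu : AY \in unitmx by move: Xu; rewrite -GY unitmx_mul => /andP[].
pose Q := invmx AY *m AX.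
have Qu : Q \is unitarymx.
  apply/unitarymxP; rewrite /Q adjM mulmxA -[invmx AY *m AX *m _]mulmxA GX -GY.
  by rewrite mulmxA mulVmx // mul1mx -adjM mulVmx // trmx1 map_mx1.
have [S1 S1u S1p] := unitary_complete (schmidt_unitarymx Y lepm).
have [S2 S2u S2p] := unitary_complete (mul_unitarymx Qu (schmidt_unitarymx X lepm)).
exists (S1^t* *m S2); first by rewrite mul_unitarymx // trmxC_unitary.
rewrite {1}(fac Y) -/AY -S1p !mulmxA -[AY *m _ *m S1 *m _]mulmxA (unitarymxP S1u) mulmx1.
by rewrite -mulmxA S2p /Q !mulmxA mulmxV // mul1mx -fac.
Qed.

Lemma psd_sqrt n (rho : 'M[C]_n) : psd rho ->
  exists Psi : 'M[C]_n, Psi *m Psi^t* = rho.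
Proof.
case=> herm pos.
have nrm : rho \is normalmx by apply/normalmxP; rewrite herm.
have Pu := spectral_unitarymx rho.
move: (orthomx_spectralP nrm) Pu.
set P := spectralmx rho; set l := spectral_diag rho => E Pu.
rewrite invmx_unitary // in E.
have lge0 : forall i, 0 <= l 0 i.
  move=> i; have := pos (P^t* *m delta_mx i 0).
  rewrite E adjM trmxCK.
  have -> : (delta_mx i 0 : 'cV[C]_n)^t* = delta_mx 0 i.
    by apply/matrixP => a b; rewrite !mxE rmorph_nat andbC.
  rewrite !mulmxA -[delta_mx 0 i *m P *m P^t*]mulmxA (unitarymxP Pu) mulmx1.
  rewrite -[delta_mx 0 i *m diag_mx l *m P *m P^t*]mulmxA (unitarymxP Pu) mulmx1.
  by rewrite -rowE row_diag_mx -scalemxAl mul_delta_mx !mxE !eqxx /= mulr1.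
exists (P^t* *m diag_mx (map_mx (fun x : C => sqrtC x) l)).
rewrite adjM trmxCK tr_diag_mx map_diag_mx mulmxA -[P^t* *m _ *m _]mulmxA mulmx_diag.
rewrite E; congr (_ *m diag_mx _ *m _); apply/matrixP => a b.
rewrite !mxE ord1; change (sqrtC (l 0 b) * (sqrtC (l 0 b))^* = l 0 b).
by rewrite geC0_conj ?sqrtC_ge0 // -expr2 sqrtCK.
Qed.

Lemma sum_tens m n (F : 'I_(m*n) -> C) :
  \sum_i F i = \sum_(a < m) \sum_(b < n) F (mxtens_index (a, b)).
Proof.
rewrite pair_big /= (reindex (@mxtens_index m n)) /=; last first.
  by exists (fun x => mxtens_unindex x) => x _; rewrite (mxtens_indexK, mxtens_unindexK).
by apply: eq_bigr => -[a b].
Qed.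

Lemma sum_tens3 m n p (F : 'I_(m * n * p) -> C) :
  \sum_i F i = \sum_(a < m) \sum_(b < n) \sum_(c < p)
     F (mxtens_index (mxtens_index (a, b), c)).
Proof.
by rewrite sum_tens (sum_tens (fun ab => \sum_c F (mxtens_index (ab, c)))).
Qed.

Lemma sum_deltar n (F : 'I_n -> C) a : \sum_i F i * (a == i)%:R = F a.
Proof.
rewrite (bigD1 a) //= eqxx mulr1 big1 ?addr0 // => i.
by rewrite eq_sym => /negPf ->; rewrite mulr0.
Qed.

Lemma sum_deltal n (F : 'I_n -> C) a : \sum_i (a == i)%:R * F i = F a.
Proof. by rewrite -(sum_deltar F a); apply: eq_bigr => i _; rewrite mulrC. Qed.

Definition Matf d k (F : 'M[C]_(d*k, d*1)) : 'M[C]_(d, d*k) :=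
  \matrix_(s, e) F (mxtens_index (s, (mxtens_unindex e).2))
                    (mxtens_index ((mxtens_unindex e).1, ord0)).

Lemma gram_Matf d k (F : 'M[C]_(d*k, d*1)) :
  Matf F *m (Matf F)^t* = ptrace2 (F *m F^t*).
Proof.
apply/matrixP => i j; rewrite !mxE sum_tens exchange_big /=.
apply: eq_bigr => u _; rewrite !mxE sum_tens.
apply: eq_bigr => a _; rewrite big_ord1 !mxE !mxtens_indexK /=.
by rewrite (ord1 (ord0 : 'I_1)).
Qed.

Lemma ptrace2_tens m n (A : 'M[C]_m) (B : 'M[C]_n) :
  ptrace2 (A *t B) = \tr B *: A.
Proof.
apply/matrixP => i j; rewrite !mxE mulrC mulr_sumr.
by apply: eq_bigr => l _; rewrite tensmxE.
Qed.

Lemma adj_tens m n p q (A : 'M[C]_(m,n)) (B : 'M[C]_(p,q)) :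
  (A *t B)^t* = A^t* *t B^t*.
Proof. by apply/matrixP => i j; rewrite !mxE rmorphM. Qed.
End LA.

Unset Implicit Arguments.

Theorem mainTheorem1 (R : realType) (d k : nat)
  (U : 'M[R[i]]_(d * k)) (chi : 'cV[R[i]]_k) (rho_ss : 'M[R[i]]_d) :
  U \is unitarymx ->
  unit_vec chi ->
  primitive (transition U chi) ->
  density rho_ss ->
  transition U chi rho_ss = rho_ss ->
  exists (psi : 'cV[R[i]]_(d * d)) (V : 'M[R[i]]_(d * k)),
    [/\ unit_vec psi,
        ptrace2 (ketbra psi) = rho_ss,
        V \is unitarymx &
        (one_s_tens_V V *m U_tens_1a U) *m (psi *t chi)
          = psi *t chi].
Proof.
move=> Uu chiu [[rho0 [dens0 fix0 rk0 uniq0]] _] dens hfix.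
have Erho : rho_ss = rho0 := uniq0 _ dens hfix.
have rho_unit : rho_ss \in unitmx by rewrite -row_free_unit /row_free Erho rk0.
have [Psi ePsi] := psd_sqrt dens.1.
pose psi : 'cV[R[i]]_(d*d) := \col_x Psi (mxtens_unindex x).1 (mxtens_unindex x).2.
pose N := Psi *t chi.
pose X := Matf N; pose Y := Matf (U *m N).
have NN : N *m N^t* = rho_ss *t ketbra chi by rewrite /N adj_tens tensmx_mul ePsi.
have trchi : \tr (ketbra chi) = 1 by rewrite /ketbra mxtrace_mulC chiu mxtrace1.
have GX : X *m X^t* = rho_ss by rewrite gram_Matf NN ptrace2_tens trchi scale1r.
have GY : Y *m Y^t* = rho_ss.
  by rewrite gram_Matf adjM mulmxA -(mulmxA U) NN; exact: hfix.
have [W Wu XYW] := purif_unitary (X:=X) (Y:=Y) (etrans GX (esym GY)) (ltac:(by rewrite GX)).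
exists psi, W^T; split.
- rewrite /unit_vec; apply/matrixP => a b; rewrite !ord1 !mxE sum_tens eqxx /=.
  rewrite -(proj2 dens) -ePsi /mxtrace; apply: eq_bigr => s _; rewrite mxE.
  by apply: eq_bigr => a' _; rewrite !mxE mxtens_indexK mulrC.
- rewrite -ePsi; apply/matrixP => i j; rewrite !mxE; apply: eq_bigr => l _.
  by rewrite !mxE big_ord1 !mxE !mxtens_indexK.
- by rewrite trmx_unitary.
have Zent : forall s a u, (U_tens_1a U *m (psi *t chi))
     (mxtens_index (mxtens_index (s, a), u)) 0 = Y s (mxtens_index (a, u)).
  move=> s a u; rewrite !mxE sum_tens3 !mxtens_indexK /= sum_tens.
  apply: eq_bigr => s' _; rewrite exchange_big /=; apply: eq_bigr => u' _.
  under eq_bigr => b _ do rewrite !mxE /idx_s /idx_a /idx_u !mxtens_indexK /= mulrAC.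
  rewrite (sum_deltar (fun b => U (mxtens_index (s, u)) (mxtens_index (s', u')) * _)) /=.
  by rewrite /N tensmxE; congr (_ * (_ * chi u' _)); apply: val_inj.
rewrite -mulmxA; apply/matrixP => x j; rewrite ord1 {j}.
case: (mxtens_indexP x) => sa u; case: (mxtens_indexP sa) => s a.
rewrite mxE sum_tens3.
under eq_bigr => a0 _ do under eq_bigr => b _ do under eq_bigr => c _ do
  rewrite Zent mxE /idx_s /idx_a /idx_u !mxtens_indexK /= -mulrA.
under eq_bigr => a0 _ do under eq_bigr => b _ do rewrite -mulr_sumr.
under eq_bigr => a0 _ do rewrite -mulr_sumr.
rewrite sum_deltal.
rewrite -(sum_tens (fun e => W^T (mxtens_index (a, u)) e * Y s e)).
have -> : \sum_e W^T (mxtens_index (a, u)) e * Y s e = (Y *m W) s (mxtens_index (a, u)).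
  by rewrite mxE; apply: eq_bigr => e _; rewrite mxE mulrC.
rewrite -XYW /X /Matf !mxE !mxtens_indexK /=.
by congr (_ * chi u _); apply: val_inj.
Qed.
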